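(* Let $G$ be a pseudo-Boolean formula and $\omega$ a substitution with $\mathrm{supp}(\omega)\subseteq\mathrm{var}(G)$. Let $\vec a$ be a list of variables with $\vec a\cap\mathrm{var}(G)=\emptyset$, let $\vec z$ be a list of $n$ variables disjoint from $\vec a$, and let $\mathcal{O}(\vec u,\vec v,\vec a)$, $\mathcal{S}(\vec u,\vec v,\vec a)$ be formulas such that $\mathcal{S}$ is a specification over $\vec a$ and the relation $\preceq$ defined by $\mathcal{O}$ and $\mathcal{S}$ is a preorder. Then: 1. If $G\cup\mathcal{S}(\vec z{\upharpoonright}_\omega,\vec z,\vec a)\vdash\mathcal{O}(\vec z{\upharpoonright}_\omega,\vec z,\vec a)$, then for each assignment $\alpha$ satisfying $G$, $\alpha\circ\omega\preceq\alpha$ holds. 2. If $G\cup\mathcal{S}(\vec z,\vec z{\upharpoonright}_\omega,\vec a)\cup\mathcal{O}(\vec z,\vec z{\upharpoonright}_\omega,\vec a)\vdash\bot$, then for each assignment $\alpha$ satisfying $G$, $\alpha\not\preceq\alpha\circ\omega$ holds.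
   Context: A literal is $x$ or $\bar x=1-x$; a PB constraint is $\sum_i a_i\ell_i\ge A$; a formula is a set of PB constraints; $\bot$ is $0\ge1$; $\mathrm{var}(G)$ is the set of variables of $G$. A substitution $\omega$ maps variables to $0,1$ or literals, extended by $\omega(\bar x)=\overline{\omega(x)}$; $\mathrm{supp}(\omega)=\{x:\omega(x)\ne x\}$; $\vec z{\upharpoonright}_\omega=\omega(z_1),\dots,\omega(z_n)$; $(\alpha\circ\omega)(x)=\alpha(\omega(x))$. For a formula $F(\vec u,\vec v,\vec a)$, $F(\vec w,\vec w',\vec a)$ denotes substitution of $\vec w,\vec w'$ for $\vec u,\vec v$. $\vdash$ denotes cutting planes derivability (sound). Assignments are total on the non-auxiliary variables under consideration (including $\vec z$ and $\mathrm{var}(G)$) and need not assign $\vec a$. A formula $\mathcal{S}(\vec x,\vec a)=\{C_1,\dots,C_m\}$ is a specification over $\vec a$ if there are substitutions $\omega_i$ with $\mathrm{supp}(\omega_i)\subseteq\vec a$ such that $\{C_1,\dots,C_{i-1},\neg C_i\}\vdash\{C_1{\upharpoonright}_{\omega_i},\dots,C_i{\upharpoonright}_{\omega_i}\}$ for each $i$, where $\neg(\sum a_i\ell_i\ge A)$ is $\sum a_i\bar\ell_i\ge\sum a_i-A+1$. The relation $\preceq$ defined by $\mathcal{O},\mathcal{S}$ on assignments $\alpha,\beta$: $\alpha\preceq\beta$ iff there is an assignment $\rho$ to $\vec a$ such that $\mathcal{S}(\vec z{\upharpoonright}_\alpha,\vec z{\upharpoonright}_\beta,\vec a{\upharpoonright}_\rho)\wedge\mathcal{O}(\vec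 z{\upharpoonright}_\alpha,\vec z{\upharpoonright}_\beta,\vec a{\upharpoonright}_\rho)$ is true. *)

(* Defs.v *)
From Stdlib Require Import ZArith List.
Import ListNotations.
Open Scope Z_scope.

Inductive lit (V : Type) : Type := Pos (x : V) | Neg (x : V).
Arguments Pos {V} x.
Arguments Neg {V} x.

Inductive term (V : Type) : Type := Const (b : bool) | Lit (l : lit V).
Arguments Const {V} b.
Arguments Lit {V} l.

Definition lit_var {V} (l : lit V) : V := match l with Pos x => x | Neg x => x end.
Definition negl {V} (l : lit V) : lit V := match l with Pos x => Neg x | Neg x => Pos x end.
Definition neg_term {V} (t : term V) : term V :=
  match t with Const b => Const (negb b) | Lit l => Lit (negl l) end.

(** A PB constraint  sum_i a_i l_i >= A  is (list of (a_i, l_i), A). *)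
Definition constraint (V : Type) : Type := (list (Z * lit V) * Z)%type.
Definition formula (V : Type) : Type := list (constraint V).

Definition bot {V} : constraint V := ([], 1).

Definition eval_lit {V} (alpha : V -> bool) (l : lit V) : bool :=
  match l with Pos x => alpha x | Neg x => negb (alpha x) end.
Definition eval_term {V} (alpha : V -> bool) (t : term V) : bool :=
  match t with Const b => b | Lit l => eval_lit alpha l end.

Definition lhs {V} (alpha : V -> bool) (ts : list (Z * lit V)) : Z :=
  fold_right (fun p s => fst p * Z.b2z (eval_lit alpha (snd p)) + s) 0 ts.
Definition sat_c {V} (alpha : V -> bool) (C : constraint V) : Prop :=
  snd C <= lhs alpha (fst C).
Definition sat_f {V} (alpha : V -> bool) (F : formula V) : Prop :=
  Forall (sat_c alpha) F.

Definition coeff_sum {V} (ts : list (Z * lit V)) : Z := fold_right (fun p s => fst p + s) 0 ts.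
Definition negate {V} (C : constraint V) : constraint V :=
  (map (fun p => (fst p, negl (snd p))) (fst C), coeff_sum (fst C) - snd C + 1).

(** Substitutions  sigma : V -> term W, extended by sigma(~x) = ~sigma(x).
    Constant literals are moved to the degree. *)
Definition subst_lit {V W} (sigma : V -> term W) (l : lit V) : term W :=
  match l with Pos x => sigma x | Neg x => neg_term (sigma x) end.

Fixpoint subst_terms {V W} (sigma : V -> term W) (ts : list (Z * lit V))
  : list (Z * lit W) * Z :=
  match ts with
  | [] => ([], 0)
  | p :: r =>
      let (ts', c) := subst_terms sigma r in
      match subst_lit sigma (snd p) with
      | Const b => (ts', fst p * Z.b2z b + c)
      | Lit l' => ((fst p, l') :: ts', c)
      end
  end.

Definition subst_c {V W} (sigma : V -> term W) (C : constraint V) : constraint W :=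
  let (ts, c) := subst_terms sigma (fst C) in (ts, snd C - c).
Definition subst_f {V W} (sigma : V -> term W) (F : formula V) : formula W :=
  map (subst_c sigma) F.

Definition occurs {V} (x : V) (F : formula V) : Prop :=
  exists C, In C F /\ exists p, In p (fst C) /\ lit_var (snd p) = x.

Definition term_mentions {V} (t : term V) (y : V) : Prop :=
  match t with Const _ => False | Lit l => lit_var l = y end.

Definition compose_assign {V} (alpha : V -> bool) (omega : V -> term V) : V -> bool :=
  fun x => eval_term alpha (omega x).

(** Cutting planes.  [same_affine] is the syntactic identification of
    linear forms modulo  ~x = 1 - x  (used for normalising constraints). *)
Definition litval {V} (f : V -> Z) (l : lit V) : Z :=
  match l with Pos x => f x | Neg x => 1 - f x end.
Definition aff {V} (f : V -> Z) (C : constraint V) : Z :=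
  fold_right (fun p s => fst p * litval f (snd p) + s) 0 (fst C) - snd C.
Definition same_affine {V} (C D : constraint V) : Prop :=
  forall f : V -> Z, aff f C = aff f D.

Definition ceil_div (a c : Z) : Z := (a + c - 1) / c.

Inductive cp_deriv {V} (F : formula V) : constraint V -> Prop :=
| cp_axiom C : In C F -> cp_deriv F C
| cp_litax l : cp_deriv F ([(1, l)], 0)
| cp_add C D : cp_deriv F C -> cp_deriv F D ->
    cp_deriv F (fst C ++ fst D, snd C + snd D)
| cp_mul c C : 0 < c -> cp_deriv F C ->
    cp_deriv F (map (fun p => (c * fst p, snd p)) (fst C), c * snd C)
| cp_div c C : 0 < c -> (forall p, In p (fst C) -> 0 <= fst p) -> cp_deriv F C ->
    cp_deriv F (map (fun p => (ceil_div (fst p) c, snd p)) (fst C), ceil_div (snd C) c)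
| cp_equiv C D : same_affine C D -> cp_deriv F C -> cp_deriv F D.

Definition derives {V} (F G : formula V) : Prop := forall C, In C G -> cp_deriv F C.
Definition refutes {V} (F : formula V) : Prop := cp_deriv F bot.

(** Template formulas F(u, v, a): variables are placeholders u_i, v_i, a_j. *)
Inductive tvar : Type := TU (i : nat) | TV (i : nat) | TA (j : nat).

Definition wf_template (n k : nat) (F : formula tvar) : Prop :=
  forall C p, In C F -> In p (fst C) ->
    match lit_var (snd p) with
    | TU i => (i < n)%nat | TV i => (i < n)%nat | TA j => (j < k)%nat
    end.

Definition tinst {W} (wu wv wa : list (term W)) : tvar -> term W :=
  fun x => match x with
           | TU i => nth i wu (Const false)
           | TV i => nth i wv (Const false)
           | TA j => nth j wa (Const false)
           end.
Definition inst {W} (F : formula tvar) (wu wv wa : list (term W)) : formula W :=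
  subst_f (tinst wu wv wa) F.

Definition vars_as_terms (xs : list nat) : list (term nat) := map (fun x => Lit (Pos x)) xs.
Definition restr_subst (xs : list nat) (omega : nat -> term nat) : list (term nat) :=
  map omega xs.
Definition restr_assign (xs : list nat) (alpha : nat -> bool) : list (term Empty_set) :=
  map (fun x => @Const Empty_set (alpha x)) xs.

Definition no_vars : Empty_set -> bool := fun e => match e with end.

(** Specification over a: S = [C_1; ...; C_m] (template), for each i there
    is omega_i with supp in a such that
    {C_1..C_{i-1}, neg C_i} |- {C_1|omega_i, ..., C_i|omega_i}.
    (index i here is 0-based.) *)
Definition is_specification (Sp : formula tvar) : Prop :=
  forall i, (i < length Sp)%nat ->
    exists omega_i : tvar -> term tvar,
      (forall x, omega_i x <> Lit (Pos x) -> exists j, x = TA j) /\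
      derives (firstn i Sp ++ [negate (nth i Sp bot)])
              (subst_f omega_i (firstn (S i) Sp)).

Definition preceq (Ob Sp : formula tvar) (z a : list nat) (alpha beta : nat -> bool) : Prop :=
  exists rho : nat -> bool,
    sat_f no_vars (inst Sp (restr_assign z alpha) (restr_assign z beta) (restr_assign a rho)) /\
    sat_f no_vars (inst Ob (restr_assign z alpha) (restr_assign z beta) (restr_assign a rho)).

Definition is_preorder {T} (R : T -> T -> Prop) : Prop :=
  (forall x, R x x) /\ (forall x y w, R x y -> R y w -> R x w).

(* Main.v *)
Require Import Defs.
From Stdlib Require Import ZArith List Lia Classical.
Import ListNotations.
Open Scope Z_scope.

Definition esem {V W} (al : W -> bool) (s : V -> term W) : V -> bool :=
  fun x => eval_term al (s x).

Lemma eval_neg_term {W} (al : W -> bool) t :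
  eval_term al (neg_term t) = negb (eval_term al t).
Proof. destruct t as [b|[x|x]]; simpl; auto. destruct (al x); auto. Qed.

Lemma eval_subst_lit {V W} (al : W -> bool) (s : V -> term W) l :
  eval_term al (subst_lit s l) = eval_lit (esem al s) l.
Proof. destruct l; simpl; unfold esem; auto using eval_neg_term. Qed.

Lemma subst_terms_lhs {V W} (al : W -> bool) (s : V -> term W) ts :
  lhs al (fst (subst_terms s ts)) + snd (subst_terms s ts) = lhs (esem al s) ts.
Proof.
  induction ts as [|p r IH]; simpl; auto.
  destruct (subst_terms s r) as [ts' c] eqn:E. simpl in IH.
  pose proof (eval_subst_lit al s (snd p)) as H.
  destruct (subst_lit s (snd p)) as [b|l'] eqn:E2; simpl in *.
  - rewrite <- H. lia.
  - unfold lhs in *; simpl. rewrite <- H. lia.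
Qed.

Lemma sat_subst_c {V W} (al : W -> bool) (s : V -> term W) C :
  sat_c al (subst_c s C) <-> sat_c (esem al s) C.
Proof.
  unfold sat_c, subst_c. pose proof (subst_terms_lhs al s (fst C)).
  destruct (subst_terms s (fst C)) as [ts c]; simpl in *. lia.
Qed.

Lemma sat_subst_f {V W} (al : W -> bool) (s : V -> term W) F :
  sat_f al (subst_f s F) <-> sat_f (esem al s) F.
Proof.
  unfold sat_f, subst_f. rewrite Forall_map.
  split; apply Forall_impl; intros; apply sat_subst_c; auto.
Qed.

Lemma sat_f_app {V} (al : V -> bool) F1 F2 :
  sat_f al (F1 ++ F2) <-> sat_f al F1 /\ sat_f al F2.
Proof. unfold sat_f. apply Forall_app. Qed.

Lemma lhs_app {V} (al : V -> bool) l1 l2 : lhs al (l1 ++ l2) = lhs al l1 + lhs al l2.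
Proof. induction l1; simpl; unfold lhs in *; simpl; lia. Qed.

Lemma lhs_mul {V} (al : V -> bool) c l :
  lhs al (map (fun p => (c * fst p, snd p)) l) = c * lhs al l.
Proof. induction l; unfold lhs in *; simpl; [lia|]. rewrite IHl. lia. Qed.

Lemma b2z_bounds b : 0 <= Z.b2z b <= 1.
Proof. destruct b; simpl; lia. Qed.

Lemma ceil_mul a c : 0 < c -> a <= c * ceil_div a c.
Proof.
  intros Hc. unfold ceil_div.
  pose proof (Z.div_mod (a + c - 1) c ltac:(lia)).
  pose proof (Z.mod_pos_bound (a + c - 1) c Hc). lia.
Qed.

Lemma lhs_div {V} (al : V -> bool) c l : 0 < c ->
  lhs al l <= c * lhs al (map (fun p => (ceil_div (fst p) c, snd p)) l).
Proof.
  intros Hc. induction l; unfold lhs in *; simpl; [lia|].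
  pose proof (ceil_mul (fst a) c Hc).
  pose proof (b2z_bounds (eval_lit al (snd a))).
  destruct (eval_lit al (snd a)); simpl in *; nia.
Qed.

Lemma aff_lhs {V} (al : V -> bool) C :
  aff (fun x => Z.b2z (al x)) C = lhs al (fst C) - snd C.
Proof.
  unfold aff. destruct C as [ts A]; simpl. f_equal.
  induction ts; simpl; auto. unfold lhs in *; simpl. rewrite IHts. f_equal. f_equal.
  destruct (snd a); simpl; auto. destruct (al x); auto.
Qed.

Lemma soundness {V} (F : formula V) C al : cp_deriv F C -> sat_f al F -> sat_c al C.
Proof.
  intros HD HF. induction HD; unfold sat_c in *; simpl.
  - unfold sat_f in HF. rewrite Forall_forall in HF. apply HF; auto.
  - unfold lhs; simpl. destruct (eval_lit al l); simpl; lia.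
  - rewrite lhs_app. lia.
  - rewrite lhs_mul. nia.
  - pose proof (lhs_div al c (fst C) H).
    set (X := lhs al (map _ _)) in *.
    assert (snd C + c - 1 < c * (X + 1)) by lia.
    unfold ceil_div. match goal with Hc : _ < c * (X + 1) |- _ => pose proof (Z.div_lt_upper_bound (snd C + c - 1) c (X+1) H Hc) end. lia.
  - pose proof (H (fun x => Z.b2z (al x))). rewrite !aff_lhs in H0. lia.
Qed.

Lemma lhs_agree {V} (b b' : V -> bool) ts :
  (forall p, In p ts -> b (lit_var (snd p)) = b' (lit_var (snd p))) ->
  lhs b ts = lhs b' ts.
Proof.
  induction ts; intros H; unfold lhs in *; simpl; auto.
  rewrite IHts by (intros; apply H; simpl; auto).
  f_equal. f_equal. f_equal.
  specialize (H a (or_introl eq_refl)). destruct (snd a); simpl in *; rewrite H; auto.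
Qed.

Lemma negate_sat {V} (al : V -> bool) C : ~ sat_c al C -> sat_c al (negate C).
Proof.
  unfold sat_c, negate; simpl. destruct C as [ts A]; simpl. intros H.
  assert (lhs al (map (fun p => (fst p, negl (snd p))) ts) = coeff_sum ts - lhs al ts).
  { clear. induction ts; unfold lhs in *; simpl; auto.
    rewrite IHts. destruct (snd a); simpl; destruct (al x); simpl; lia. }
  lia.
Qed.

Lemma firstn_S_nth {T} (l : list T) k d : (k < length l)%nat ->
  firstn (S k) l = firstn k l ++ [nth k l d].
Proof.
  revert k; induction l; intros k Hk; simpl in *; [lia|].
  destruct k; simpl; auto. rewrite IHl by lia. auto.
Qed.

Lemma spec_sat Sp (b0 : tvar -> bool) : is_specification Sp ->
  exists b, sat_f b Sp /\ forall i, b (TU i) = b0 (TU i) /\ b (TV i) = b0 (TV i).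
Proof.
  intros HS.
  assert (forall k, (k <= length Sp)%nat -> exists b, sat_f b (firstn k Sp) /\
     forall i, b (TU i) = b0 (TU i) /\ b (TV i) = b0 (TV i)).
  { induction k; intros Hk.
    - exists b0. split; auto. constructor.
    - destruct IHk as [b [Hb Ha]]; [lia|].
      rewrite (firstn_S_nth Sp k bot) by lia.
      destruct (classic (sat_c b (nth k Sp bot))) as [Hc|Hc].
      + exists b. split; auto. apply sat_f_app. split; auto. constructor; auto.
      + destruct (HS k ltac:(lia)) as [om [Hsupp Hder]].
        assert (Hs : sat_f b (subst_f om (firstn (S k) Sp))).
        { unfold sat_f. apply Forall_forall. intros C HC. eapply soundness.
          apply Hder; auto. apply sat_f_app; split; auto.
          constructor; auto. apply negate_sat; auto. }
        apply sat_subst_f in Hs. rewrite (firstn_S_nth Sp k bot) in Hs by lia.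
        exists (esem b om). split; auto.
        intros i. unfold esem.
        assert (E1 : om (TU i) = Lit (Pos (TU i))).
        { destruct (classic (om (TU i) = Lit (Pos (TU i)))); auto.
          destruct (Hsupp _ H) as [j Hj]; discriminate. }
        assert (E2 : om (TV i) = Lit (Pos (TV i))).
        { destruct (classic (om (TV i) = Lit (Pos (TV i)))); auto.
          destruct (Hsupp _ H) as [j Hj]; discriminate. }
        rewrite E1, E2. simpl. apply Ha. }
  destruct (H (length Sp) ltac:(lia)) as [b [Hb Ha]]. rewrite firstn_all in Hb. eauto.
Qed.

Lemma nth_map_eval {W1 W2} (e1 : W1 -> bool) (e2 : W2 -> bool) f g (l : list nat) i :
  (forall x, In x l -> eval_term e1 (f x) = eval_term e2 (g x)) ->
  eval_term e1 (nth i (map f l) (Const false)) = eval_term e2 (nth i (map g l) (Const false)).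
Proof.
  revert i; induction l; intros i H; destruct i; simpl; auto; [apply H; simpl; auto|].
  apply IHl. intros; apply H; simpl; auto.
Qed.

Fixpoint pos (y : nat) (l : list nat) : nat :=
  match l with [] => O | x :: r => if Nat.eq_dec x y then O else S (pos y r) end.

Lemma pos_nth (l : list nat) j : NoDup l -> (j < length l)%nat -> pos (nth j l 0%nat) l = j.
Proof.
  revert j; induction l; intros j Hn Hj; simpl in *; [lia|].
  inversion Hn; subst. destruct j.
  - destruct (Nat.eq_dec a a); congruence.
  - destruct (Nat.eq_dec a (nth j l 0%nat)).
    + exfalso. apply H1. rewrite e. apply nth_In. lia.
    + rewrite IHl; auto; lia.
Qed.

Lemma sat_f_agree_all {V} (b b' : V -> bool) F : (forall x, b x = b' x) ->
  sat_f b F -> sat_f b' F.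
Proof.
  intros H. unfold sat_f. apply Forall_impl. intros C. unfold sat_c.
  rewrite (lhs_agree b b'); auto.
Qed.

Theorem lemma3 (G : formula nat) (omega : nat -> term nat) (a z : list nat) (n : nat)
  (Ob Sp : formula tvar) :
  (* supp(omega) is contained in var(G) *)
  (forall x, omega x <> Lit (Pos x) -> occurs x G) ->
  (* omega does not map into the auxiliary variables a (needed so that
     alpha o omega is meaningful for assignments not assigning a) *)
  (forall x y, omega x <> Lit (Pos x) -> term_mentions (omega x) y -> ~ In y a) ->
  NoDup a ->
  (forall x, In x a -> ~ occurs x G) ->
  length z = n ->
  (forall x, In x z -> ~ In x a) ->
  wf_template n (length a) Ob ->
  wf_template n (length a) Sp ->
  is_specification Sp ->
  is_preorder (preceq Ob Sp z a) ->
  (derives (G ++ inst Sp (restr_subst z omega) (vars_as_terms z) (vars_as_terms a))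
           (inst Ob (restr_subst z omega) (vars_as_terms z) (vars_as_terms a)) ->
   forall alpha, sat_f alpha G -> preceq Ob Sp z a (compose_assign alpha omega) alpha)
  /\
  (refutes (G ++ inst Sp (vars_as_terms z) (restr_subst z omega) (vars_as_terms a)
              ++ inst Ob (vars_as_terms z) (restr_subst z omega) (vars_as_terms a)) ->
   forall alpha, sat_f alpha G -> ~ preceq Ob Sp z a alpha (compose_assign alpha omega)).
Proof.
  intros Hsupp Hom Hnd HaG Hz Hza HwO HwS HS _.
  assert (Kom : forall (g al : nat -> bool) x, In x z ->
            (forall y, ~ In y a -> g y = al y) ->
            eval_term g (omega x) = eval_term al (omega x)).
  { intros g al x Hx Hg.
    destruct (classic (omega x = Lit (Pos x))) as [E|E].
    - rewrite E. simpl. apply Hg, Hza, Hx.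
    - pose proof (Hom x) as Hx'. destruct (omega x) as [b|l] eqn:Eo; simpl; auto.
      assert (~ In (lit_var l) a) by (apply (Hx' (lit_var l)); auto; simpl; auto).
      destruct l; simpl in *; rewrite Hg; auto. }
  assert (KG : forall (g al : nat -> bool), (forall y, ~ In y a -> g y = al y) ->
            sat_f al G -> sat_f g G).
  { intros g al Hg HG. unfold sat_f in *. rewrite Forall_forall in *.
    intros C HC. unfold sat_c. rewrite (lhs_agree g al). apply HG; auto.
    intros p Hp. apply Hg. intros Hin. apply (HaG _ Hin). exists C. split; auto. eauto. }
  split.
  - intros Hder al HG.
    set (b0 := esem al (tinst (restr_subst z omega) (vars_as_terms z) (vars_as_terms a))).
    destruct (spec_sat Sp b0 HS) as [bS [HbS Hag]].
    set (g := fun y => if in_dec Nat.eq_dec y a then bS (TA (pos y a)) else al y).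
    assert (Hg : forall y, ~ In y a -> g y = al y).
    { intros y Hy. unfold g. destruct (in_dec Nat.eq_dec y a); tauto. }
    set (d := esem g (tinst (restr_subst z omega) (vars_as_terms z) (vars_as_terms a))).
    assert (HdS : sat_f d Sp).
    { unfold sat_f in *. rewrite Forall_forall in *. intros C HC.
      unfold sat_c. rewrite (lhs_agree d bS). apply HbS; auto.
      intros p Hp. pose proof (HwS C p HC Hp) as Hw.
      destruct (lit_var (snd p)) as [i|i|j].
      - rewrite (proj1 (Hag i)). unfold d, b0, esem; simpl.
        unfold restr_subst. apply nth_map_eval. intros; apply Kom; auto.
      - rewrite (proj2 (Hag i)). unfold d, b0, esem; simpl.
        unfold vars_as_terms. apply nth_map_eval. intros; simpl. apply Hg, Hza; auto.
      - unfold d, esem; simpl. unfold vars_as_terms.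
        rewrite (nth_indep _ _ (Lit (Pos 0%nat))) by (rewrite length_map; auto).
        rewrite (map_nth (fun x => Lit (Pos x))). simpl.
        unfold g. destruct (in_dec Nat.eq_dec (nth j a 0%nat) a) as [_|Hn].
        + rewrite pos_nth; auto.
        + exfalso. apply Hn, nth_In. auto. }
    assert (HgAll : sat_f g (G ++ inst Sp (restr_subst z omega) (vars_as_terms z) (vars_as_terms a))).
    { apply sat_f_app; split. eapply KG; eauto. unfold inst. apply sat_subst_f. exact HdS. }
    assert (HgO : sat_f g (inst Ob (restr_subst z omega) (vars_as_terms z) (vars_as_terms a))).
    { unfold sat_f. apply Forall_forall. intros C HC. eapply soundness; eauto. }
    exists g.
    assert (Eq : forall x, d x = esem no_vars (tinst (restr_assign z (compose_assign al omega))
                   (restr_assign z al) (restr_assign a g)) x).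
    { intros [i|i|j]; unfold d, esem; simpl; unfold restr_subst, restr_assign, vars_as_terms;
        apply nth_map_eval; intros x Hx; simpl.
      - unfold compose_assign. apply Kom; auto.
      - apply Hg, Hza; auto.
      - auto. }
    unfold inst in *. split; apply sat_subst_f; eapply sat_f_agree_all; try exact Eq.
    + exact HdS.
    + apply sat_subst_f. exact HgO.
  - intros Href al HG [rho [H1 H2]].
    set (g := fun y => if in_dec Nat.eq_dec y a then rho y else al y).
    assert (Hg : forall y, ~ In y a -> g y = al y).
    { intros y Hy. unfold g. destruct (in_dec Nat.eq_dec y a); tauto. }
    set (d := esem g (tinst (vars_as_terms z) (restr_subst z omega) (vars_as_terms a))).
    assert (Eq : forall x, esem no_vars (tinst (restr_assign z al)
                   (restr_assign z (compose_assign al omega)) (restr_assign a rho)) x = d x).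
    { intros [i|i|j]; unfold d, esem; simpl; unfold restr_subst, restr_assign, vars_as_terms;
        apply nth_map_eval; intros x Hx; simpl.
      - symmetry. apply Hg, Hza; auto.
      - unfold compose_assign. symmetry. apply Kom; auto.
      - unfold g. destruct (in_dec Nat.eq_dec x a); tauto. }
    unfold inst in *. apply sat_subst_f in H1, H2.
    assert (Hall : sat_f g (G ++ subst_f (tinst (vars_as_terms z) (restr_subst z omega) (vars_as_terms a)) Sp
       ++ subst_f (tinst (vars_as_terms z) (restr_subst z omega) (vars_as_terms a)) Ob)).
    { apply sat_f_app; split; [eapply KG; eauto|]. apply sat_f_app; split; apply sat_subst_f;
      eapply sat_f_agree_all; eauto. }
    pose proof (soundness _ _ _ Href Hall). unfold sat_c, bot in H. simpl in H. unfold lhs in H. simpl in H. lia.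
Qed.
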